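(* Let $A,B$ be abstract state spaces and let $\omega\in A\otimes_{\max}B$ be a state that is steering for its $B$-marginal $\omega^B$. Then $\hat\omega(A^*_+)=\mathrm{Face}(\omega^B)$, the smallest face of $B_+$ containing $\omega^B$.
   Context: An abstract state space is a pair $(A,u_A)$ where $A$ is a finite-dimensional real vector space with a closed, pointed, generating convex cone $A_+$, and $u_A$ is an interior point of the dual cone $A^*_+$. An effect on $A$ is $a\in A^*_+$ with $a\le u_A$; an observable on $A$ is a finite family of effects $\{a_i\}$ with $\sum_i a_i=u_A$. $A\otimes_{\max}B$ is the space of bilinear forms on $A^*\times B^*$ nonnegative on $A^*_+\times B^*_+$; a state is such a form with $\omega(u_A,u_B)=1$; $\hat\omega:A^*\to B$ is $\hat\omega(a)(b)=\omega(a,b)$ and $\omega^B=\hat\omega(u_A)$. An ensemble for $\beta\in B_+$ is a finite family $\beta_i\in B_+$ with $\sum_i\beta_i=\beta$. $\omega$ is steering for its $B$-marginal if for every ensemble $\{\beta_i\}$ for $\omega^B$ there is an observable $\{x_i\}$ on $A$ with $\hat\omega(x_i)=\beta_i$ for all $i$. A face of $B_+$ is a subcone $F_+$ such that $x,y\in B_+$, $x+y\in F_+$ imply $x,y\in F_+$. *)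

(* Defs.v *)
From HB Require Import structures.
From mathcomp Require Import all_boot all_order all_algebra.
From mathcomp Require Import all_classical all_reals all_analysis.
Set Implicit Arguments. Unset Strict Implicit. Unset Printing Implicit Defensive.
Import Order.TTheory GRing.Theory Num.Theory.
Import numFieldNormedType.Exports.
Local Open Scope classical_set_scope.
Local Open Scope ring_scope.

(* A finite-dimensional real vector space of dimension n is modelled as the
   column vectors 'cV[R]_n; its dual A^* as row vectors 'rV[R]_n, with the
   canonical pairing <a, x> = a *m x. *)
Section Defs.
Variable R : realType.

Definition pair n (a : 'rV[R]_n) (x : 'cV[R]_n) : R := (a *m x) ord0 ord0.

Definition convex_cone {T : lmodType R} (K : set T) : Prop :=
  K 0 /\ (forall x y, K x -> K y -> K (x + y)) /\
  (forall (t : R) x, 0 <= t -> K x -> K (t *: x)).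

Definition pointed_cone {T : lmodType R} (K : set T) : Prop :=
  forall x, K x -> K (- x) -> x = 0.

Definition generating_cone {T : lmodType R} (K : set T) : Prop :=
  forall x, exists y z, [/\ K y, K z & x = y - z].

Definition proper_cone n (K : set 'cV[R]_n) : Prop :=
  [/\ convex_cone K, closed K, pointed_cone K & generating_cone K].

Definition dual_cone n (K : set 'cV[R]_n) : set 'rV[R]_n :=
  [set a | forall x, K x -> 0 <= pair a x].

Record state_space n := StateSpace {
  cone : set 'cV[R]_n;
  unit : 'rV[R]_n;
  cone_proper : proper_cone cone;
  unit_interior : interior (dual_cone cone) unit
}.

Section Ops.
Variables (n m : nat) (A : state_space n) (B : state_space m).

Definition effect (a : 'rV[R]_n) : Prop :=
  dual_cone (cone A) a /\ dual_cone (cone A) (unit A - a).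

Definition observable k (x : 'I_k -> 'rV[R]_n) : Prop :=
  (forall i, effect (x i)) /\ \sum_(i < k) x i = unit A.

(* bilinear form on A^* x B^* represented by W : omega(a,b) = a W b^T *)
Definition bil (W : 'M[R]_(n, m)) (a : 'rV[R]_n) (b : 'rV[R]_m) : R :=
  (a *m W *m b^T) ord0 ord0.

Definition max_tensor (W : 'M[R]_(n, m)) : Prop :=
  forall a b, dual_cone (cone A) a -> dual_cone (cone B) b -> 0 <= bil W a b.

Definition is_state (W : 'M[R]_(n, m)) : Prop :=
  max_tensor W /\ bil W (unit A) (unit B) = 1.

(* \hat omega : A^* -> B,  \hat omega(a)(b) = omega(a,b) *)
Definition hat (W : 'M[R]_(n, m)) (a : 'rV[R]_n) : 'cV[R]_m := (a *m W)^T.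

Definition marginalB (W : 'M[R]_(n, m)) : 'cV[R]_m := hat W (unit A).

Definition ensemble (beta : 'cV[R]_m) k (b : 'I_k -> 'cV[R]_m) : Prop :=
  (forall i, cone B (b i)) /\ \sum_(i < k) b i = beta.

Definition steering (W : 'M[R]_(n, m)) : Prop :=
  forall k (b : 'I_k -> 'cV[R]_m), ensemble (marginalB W) b ->
    exists x : 'I_k -> 'rV[R]_n, observable x /\ forall i, hat W (x i) = b i.

Definition is_face (F : set 'cV[R]_m) : Prop :=
  [/\ F `<=` cone B, convex_cone F &
      forall x y, cone B x -> cone B y -> F (x + y) -> F x /\ F y].

Definition Face (beta : 'cV[R]_m) : set 'cV[R]_m :=
  [set x | forall F, is_face F -> F beta -> F x].

End Ops.
End Defs.

(* Main.v *)
Require Import Defs.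
From HB Require Import structures.
From mathcomp Require Import all_boot all_order all_algebra.
From mathcomp Require Import all_classical all_reals all_analysis.
From mathcomp Require Import ring lra.
Set Implicit Arguments. Unset Strict Implicit. Unset Printing Implicit Defensive.
Import Order.TTheory GRing.Theory Num.Theory.
Import numFieldNormedType.Exports.
Local Open Scope classical_set_scope.
Local Open Scope ring_scope.

Section Sep.
Variable R : realType.

Definition dot n (x y : 'rV[R]_n) : R := \sum_i x ord0 i * y ord0 i.

Lemma dot_expand n (x y : 'rV[R]_n) (t : R) :
  dot (x - t *: y) (x - t *: y) = dot x x - 2 * t * dot x y + t ^+ 2 * dot y y.
Proof.
rewrite /dot !mulr_sumr -sumrN -!big_split /=; apply: eq_bigr => i _.
rewrite !mxE; ring.
Qed.

Lemma dotDr n (x y z : 'rV[R]_n) : dot x (y + z) = dot x y + dot x z.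
Proof. by rewrite /dot -big_split; apply: eq_bigr => i _; rewrite !mxE mulrDr. Qed.

Lemma dot_ge0 n (x : 'rV[R]_n) : 0 <= dot x x.
Proof. by apply: sumr_ge0 => i _; rewrite -expr2 sqr_ge0. Qed.

Lemma dot_eq0 n (x : 'rV[R]_n) : dot x x = 0 -> x = 0.
Proof.
move=> /psumr_eq0P H; apply/matrixP => i j; rewrite mxE (ord1 i).
have /H /(_ j isT) /eqP : forall i, true -> 0 <= x ord0 i * x ord0 i.
  by move=> k _; rewrite -expr2 sqr_ge0.
by rewrite mulf_eq0 orbb => /eqP.
Qed.

Lemma cont_sum (T : topologicalType) (I : Type) (r : seq I) (F : I -> T -> R) :
  (forall i, continuous (F i)) -> continuous (fun x => \sum_(i <- r) F i x).
Proof.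
move=> HF; elim: r => [|i r IH].
  under eq_fun do rewrite big_nil. exact: cst_continuous.
under eq_fun do rewrite big_cons.
by move=> x; apply: continuousD; [exact: HF|exact: IH].
Qed.

Lemma cont_dot n (c : 'rV[R]_n) : continuous (fun v : 'rV[R]_n => dot (c - v) (c - v)).
Proof.
apply: cont_sum => i.
have h : continuous (fun v : 'rV[R]_n => (c - v) ord0 i).
  under eq_fun do rewrite !mxE.
  move=> v; apply: continuousB; first exact: cst_continuous.
  exact: coord_continuous.
by move=> v; apply: continuousM; apply: h.
Qed.

Lemma cont_tr n : continuous (fun v : 'rV[R]_n => v^T).
Proof.
move=> u A /nbhs_ballP[e /= e0 eA].
apply/nbhs_ballP; exists e => //= v [_ uv]; apply: eA; split => // i j.
by rewrite !mxE; apply: uv.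
Qed.

Lemma pos_lim (a q : R) : 0 <= q -> (forall t, 0 < t <= 1 -> 0 <= t * q + a) -> 0 <= a.
Proof.
move=> q0 H; rewrite leNgt; apply/negP => a0.
have qa : 0 < q - a by lra.
pose t := - a / (q - a).
have tq : t * (q - a) = - a by rewrite /t mulfVK // gt_eqF.
have t0 : 0 < t by rewrite /t divr_gt0 // oppr_gt0.
have t1 : t <= 1 by rewrite /t ler_pdivrMr //; lra.
have := H t; rewrite t0 t1 => /(_ isT).
have -> : t * q + a = t * a by nra.
by rewrite pmulr_rge0 // leNgt a0.
Qed.

Lemma term_le_dot n (x : 'rV[R]_n) i : x ord0 i * x ord0 i <= dot x x.
Proof.
rewrite /dot (bigD1 i) //= lerDl; apply: sumr_ge0 => j _.
by rewrite -expr2 sqr_ge0.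
Qed.

Lemma abs_le_sum n (x : 'rV[R]_n) i : `|x ord0 i| <= \sum_j `|x ord0 j|.
Proof. by rewrite (bigD1 i) //= lerDl; apply: sumr_ge0. Qed.

Lemma sep n (K : set 'rV[R]_n) (c : 'rV[R]_n) : closed K ->
  convex_cone K -> ~ K c ->
  exists d, (forall k, K k -> dot d k <= 0) /\ 0 < dot d c.
Proof.
move=> Kcl [K0 [KD KZ]] Kc.
pose Q := dot c c.
have Q0 : 0 <= Q by apply: dot_ge0.
pose M := \sum_i `|c ord0 i| + 1 + Q.
have M0 : 0 <= M.
  have : 0 <= \sum_i `|c ord0 i| by apply: sumr_ge0.
  rewrite /M; lra.
pose box := [set v : 'rV[R]_n | forall i, `[-M, M]%classic (v ord0 i)].
have cbox : compact box.
    by apply: (@rV_compact _ _ (fun=> `[-M, M]%classic)) => i; apply: segment_compact.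
pose S := box `&` K.
have cS : compact S by apply: compact_closedI.
have S0 : S 0.
  split=> // i /=; rewrite mxE in_itv /=; apply/andP; split; lra.
pose f := fun v : 'rV[R]_n => dot (c - v) (c - v).
have [k0 k0S k0min] : exists2 k0, k0 \in S & forall t, t \in S -> f k0 <= f t.
  apply: EVT_min_rV; first by exists 0.
    exact: cS.
  by apply: continuous_subspaceT; apply: cont_dot.
move: k0S; rewrite inE => -[_ Kk0].
have fk0 : f k0 <= Q by have := k0min 0; rewrite inE /f subr0; apply.
have glob : forall p, K p -> f k0 <= f p.
  move=> p Kp; have [bp|nbp] := pselect (box p).
    by apply: k0min; rewrite inE.
  have [i hi] : exists i, ~ `[-M, M]%classic (p ord0 i).
    by apply/existsNP => H; apply: nbp => i; apply: H.
  have hM : M < `|p ord0 i|.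
    rewrite ltNge; apply/negP => H; apply: hi => /=.
    by rewrite in_itv /= -ler_norml.
  have h1 := term_le_dot (c - p) i.
  have h2 := abs_le_sum c i.
  rewrite !mxE in h1.
  have h3 : `|p ord0 i| <= `|c ord0 i - p ord0 i| + `|c ord0 i|.
    have e : p ord0 i = - (c ord0 i - p ord0 i) + c ord0 i by ring.
    by rewrite {1}e (le_trans (ler_normD _ _)) // normrN.
  have h4 : (c ord0 i - p ord0 i) * (c ord0 i - p ord0 i) =
     `|c ord0 i - p ord0 i| * `|c ord0 i - p ord0 i|.
    by rewrite -normrM ger0_norm // -expr2 sqr_ge0.
  have h5 : 1 + Q < `|c ord0 i - p ord0 i| by rewrite /M in hM; lra.
  have h6 : Q < `|c ord0 i - p ord0 i| * `|c ord0 i - p ord0 i|.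
    move: h5 Q0; clear; set x := `|_|; move=> h5 Q0.
    have x1 : x <= x * x by rewrite ler_peMr; lra.
    lra.
  rewrite /f in fk0 *; lra.
pose d := c - k0.
have fE : forall k t, f (k0 + t *: k) = dot (d - t *: k) (d - t *: k).
  by move=> k t; rewrite /f /d opprD addrA.
have hk : forall k, K k -> dot d k <= 0.
  move=> k Kk.
  suff : 0 <= - 2 * dot d k by lra.
  apply: (@pos_lim _ (dot k k) (dot_ge0 _)) => t /andP[t0 t1].
  have := glob (k0 + t *: k) (KD _ _ Kk0 (KZ _ _ (ltW t0) Kk)).
  rewrite fE dot_expand -/(f k0) /f -/d => h.
  have : 0 <= t * (t * dot k k + - 2 * dot d k) by nra.
  by rewrite pmulr_rge0.
have hk0 : 0 <= dot d k0.
  suff : 0 <= 2 * dot d k0 by lra.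
  apply: (@pos_lim _ (dot k0 k0) (dot_ge0 _)) => t /andP[t0 t1].
  have Kt : K (k0 + (- t) *: k0).
    have -> : k0 + (- t) *: k0 = (1 - t) *: k0 by rewrite scalerBl scale1r scaleNr.
    by apply: KZ => //; lra.
  have := glob _ Kt.
  rewrite fE dot_expand /f -/d => h.
  have : 0 <= t * (t * dot k0 k0 + 2 * dot d k0) by nra.
  by rewrite pmulr_rge0.
have dd : 0 < dot d d.
  rewrite lt_neqAle dot_ge0 andbT eq_sym; apply/negP => /eqP /dot_eq0 d0.
  by apply: Kc; move: d0; rewrite /d => /eqP; rewrite subr_eq0 => /eqP ->.
exists d; split => //.
have -> : c = d + k0 by rewrite /d subrK.
rewrite dotDr; lra.
Qed.
End Sep.
Section S.
Variable R : realType.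
Lemma ballE n (u v : 'rV[R]_n) e : (0 < e /\ forall i j, `|u i j - v i j| < e) -> ball u e v.
Proof. move=> [e0 h]. split => //. Qed.

Lemma pair_dot n (x : 'rV[R]_n) (k : 'cV[R]_n) : pair x k = dot x k^T.
Proof. by rewrite /pair /dot mxE; apply: eq_bigr => j _; rewrite !mxE. Qed.

Lemma pairD n (a b : 'rV[R]_n) x : pair (a + b) x = pair a x + pair b x.
Proof. by rewrite /pair mulmxDl mxE. Qed.

Lemma pairZ n (t : R) (a : 'rV[R]_n) x : pair (t *: a) x = t * pair a x.
Proof. by rewrite /pair -scalemxAl mxE. Qed.

Lemma dualD n (K : set 'cV[R]_n) a b :
  dual_cone K a -> dual_cone K b -> dual_cone K (a + b).
Proof. by move=> ha hb x Kx; rewrite pairD addr_ge0 //; [apply: ha|apply: hb]. Qed.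

Lemma dualZ n (K : set 'cV[R]_n) (t : R) a :
  0 <= t -> dual_cone K a -> dual_cone K (t *: a).
Proof. by move=> t0 ha x Kx; rewrite pairZ mulr_ge0 //; apply: ha. Qed.

Lemma interior_step n (K : set 'cV[R]_n) (u a : 'rV[R]_n) :
  interior (dual_cone K) u -> exists2 t : R, 0 < t & dual_cone K (u - t *: a).
Proof.
move=> /nbhs_ballP [e /= e0 He].
pose s := \sum_j `|a ord0 j| + 1.
have s0 : 0 < s by rewrite /s ltr_wpDl // sumr_ge0.
exists (e / s); first by rewrite divr_gt0.
apply: He; apply: ballE; split => // i j.
rewrite !mxE (ord1 i) opprB addrC subrK normrM gtr0_norm ?divr_gt0 //.
rewrite -mulrA gtr_pMr //  ltr_pdivrMl // mulr1.
have := abs_le_sum a j; rewrite /s; lra.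
Qed.

Lemma bil_pair n m (W : 'M[R]_(n, m)) a b : bil W a b = pair b (hat W a).
Proof.
by rewrite /bil /pair /hat -[in LHS](trmxK (a *m W *m b^T)) trmx_mul trmxK mxE.
Qed.

Lemma hatD n m (W : 'M[R]_(n, m)) a b : hat W (a + b) = hat W a + hat W b.
Proof. by rewrite /hat mulmxDl linearD. Qed.

Lemma hatZ n m (W : 'M[R]_(n, m)) (t : R) a : hat W (t *: a) = t *: hat W a.
Proof. by rewrite /hat -scalemxAl linearZ. Qed.

Lemma hat0 n m (W : 'M[R]_(n, m)) : hat W 0 = 0.
Proof. by rewrite /hat mul0mx trmx0. Qed.

Lemma dotNl n (x y : 'rV[R]_n) : dot (- x) y = - dot x y.
Proof. by rewrite /dot -sumrN; apply: eq_bigr => j _; rewrite mxE mulNr. Qed.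

Lemma key n m (A : state_space R n) (B : state_space R m) (W : 'M[R]_(n, m)) a :
  max_tensor A B W -> dual_cone (cone A) a -> cone B (hat W a).
Proof.
move=> mt Da; case: (cone_proper B) => [[K0 [KD KZ]] Kcl _ _].
pose K' := [set v : 'rV[R]_m | cone B v^T].
have K'cl : closed K'.
  by apply: (preimage_closed (f := fun v : 'rV[R]_m => v^T)) => // v _; apply: cont_tr.
have K'cc : convex_cone K'.
  split; first by rewrite /K' /= trmx0.
  split; first by move=> x y; rewrite /K' /= linearD; apply: KD.
  by move=> t x t0; rewrite /K' /= linearZ; apply: KZ.
apply: contrapT => nK.
have nK' : ~ K' (hat W a)^T by rewrite /K' /= trmxK.
have [d [hd hc]] := sep K'cl K'cc nK'.
have Db : dual_cone (cone B) (- d).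
  move=> k Bk; rewrite pair_dot dotNl oppr_ge0.
  by apply: hd; rewrite /K' /= trmxK.
have := mt _ _ Da Db; rewrite bil_pair pair_dot.
by rewrite dotNl oppr_ge0 leNgt hc.
Qed.
End S.

Unset Implicit Arguments.
Theorem lemma5p2 (R : realType) (n m : nat)
  (A : state_space R n) (B : state_space R m) (W : 'M[R]_(n, m)) :
  is_state A B W -> steering A B W ->
  hat W @` dual_cone (cone A) = Face B (marginalB A W).
Proof.
move=> [mt _] st.
have uD : dual_cone (cone A) (unit A) by apply: interior_subset (unit_interior A).
case: (cone_proper B) => [[BK0 [BKD BKZ]] _ _ _].
apply/seteqP; split.
- move=> _ [a Da <-] F [FB [F0 [FD FZ]] Fface] Fw.
  have [t t0 Dt] := interior_step a (unit_interior A).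
  have e : marginalB A W = hat W (t *: a) + hat W (unit A - t *: a).
    by rewrite -hatD addrC subrK.
  have [F1 _] := Fface _ _ (key mt (dualZ (ltW t0) Da)) (key mt Dt) ltac:(by rewrite -e).
  rewrite hatZ in F1.
  have ti : 0 <= t^-1 by rewrite invr_ge0 ltW.
  by have := FZ _ _ ti F1; rewrite scalerA mulVf ?gt_eqF // scale1r.
- move=> x Fx; apply: Fx; last by exists (unit A).
  split.
  + by move=> _ [a Da <-]; exact: key mt Da.
  + split; first by exists 0; [move=> k _; rewrite /pair mul0mx mxE | exact: hat0].
    split.
      move=> _ _ [a Da <-] [b Db <-]; exists (a + b); [exact: dualD | exact: hatD].
    move=> t _ t0 [a Da <-]; exists (t *: a); [exact: dualZ | exact: hatZ].
  + move=> x1 y1 Bx By [a Da exy].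
    have [t t0 Dt] := interior_step a (unit_interior A).
    pose b (i : 'I_3) : 'cV[R]_m :=
      if val i == 0%N then t *: x1 else if val i == 1%N then t *: y1
      else hat W (unit A - t *: a).
    have ens : ensemble B (marginalB A W) b.
      split.
        move=> i; rewrite /b; case: ifP => _; first exact: BKZ (ltW t0) Bx.
        case: ifP => _; first exact: BKZ (ltW t0) By.
        exact: key mt Dt.
      rewrite !big_ord_recl big_ord0 /b /= addr0 addrA -scalerDr -exy -hatZ -hatD.
      by rewrite addrC subrK.
    have [e [[effe _] he]] := st _ _ ens.
    have ti : 0 <= t^-1 by rewrite invr_ge0 ltW.
    have gen : forall i z, b i = t *: z -> (hat W @` dual_cone (cone A)) z.
      move=> i z bz; exists (t^-1 *: e i); first exact: dualZ ti (effe i).1.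
      by rewrite hatZ he bz scalerA mulVf ?gt_eqF // scale1r.
    by split; [apply: (gen ord0) | apply: (gen (lift ord0 ord0))].
Qed.
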